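(* Assume the setting and algorithm described in the context. If $0<\alpha\le\frac1{2L}$, then for all $k\ge0$, almost surely, $$\mathbb E\big[F(\bar x^{k+1})\,|\,\mathcal F^k\big]\le F(\bar x^k)-\frac\alpha2\|\nabla F(\bar x^k)\|^2-\frac\alpha4\|\overline{\nabla\mathbf f}(x^k)\|^2+\frac{\alpha L^2}{n}\|x^k-Jx^k\|^2+\frac{\alpha^2L^3}{n}t^k .$$
   Context: Setting. Let $n,m,p\ge1$ be integers and $\mathcal V=\{1,\dots,n\}$. For each $i\in\mathcal V$ and $j\in\{1,\dots,m\}$, $f_{i,j}:\mathbb R^p\to\mathbb R$ is differentiable and $L$-smooth for some $L>0$, i.e. $\|\nabla f_{i,j}(x)-\nabla f_{i,j}(y)\|\le L\|x-y\|$ for all $x,y\in\mathbb R^p$. Let $f_i:=\frac1m\sum_{j=1}^m f_{i,j}$ and $F:=\frac1n\sum_{i=1}^n f_i$, and assume $F^*:=\inf_{x\in\mathbb R^p}F(x)>-\infty$. Let $\underline W=(\underline w_{ir})\in\mathbb R^{n\times n}$ be a nonnegative, primitive, doubly stochastic matrix ($\underline W\mathbf 1_n=\mathbf 1_n$, $\mathbf 1_n^\top\underline W=\mathbf 1_n^\top$), and let $\lambda\in[0,1)$ be its second largest singular value. Any expression with $\lambda$ in a denominator is read as $+\infty$ when $\lambda=0$. Algorithm GT-SAGA with step-size $\alpha>0$: fix a deterministic $\bar x^0\in\mathbb R^p$; for all $i\in\mathcal V$ set $x_i^0=\bar x^0$, $z_{i,j}^0=x_i^0$ for all $j$, $y_i^0=0$,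 $g_i^{-1}=0$. For $k=0,1,2,\dots$ and every $i\in\mathcal V$: draw $\tau_i^k$ uniformly from $\{1,\dots,m\}$; set $g_i^k=\nabla f_{i,\tau_i^k}(x_i^k)-\nabla f_{i,\tau_i^k}(z_{i,\tau_i^k}^k)+\frac1m\sum_{j=1}^m\nabla f_{i,j}(z_{i,j}^k)$; set $y_i^{k+1}=\sum_{r=1}^n\underline w_{ir}(y_r^k+g_r^k-g_r^{k-1})$; set $x_i^{k+1}=\sum_{r=1}^n\underline w_{ir}(x_r^k-\alpha y_r^{k+1})$; draw $s_i^k$ uniformly from $\{1,\dots,m\}$; set $z_{i,j}^{k+1}=x_i^k$ if $j=s_i^k$ and $z_{i,j}^{k+1}=z_{i,j}^k$ otherwise. The family $\{\tau_i^k,s_i^k: i\in\mathcal V,k\ge0\}$ is independent. Notation. $x^k,y^k,g^k\in\mathbb R^{np}$ stack the $x_i^k$, $y_i^k$, $g_i^k$; $\nabla\mathbf f(x^k)\in\mathbb R^{np}$ stacks $\nabla f_i(x_i^k)$, $i=1,\dots,n$; $W=\underline W\otimes I_p$, $J=(\frac1n\mathbf 1_n\mathbf 1_n^\top)\otimes I_p$; $\bar x^k=\frac1n\sum_i x_i^k$, $\bar g^k=\frac1n\sum_i g_i^k$, $\overline{\nabla\mathbf f}(x^k)=\frac1n\sum_i\nabla f_i(x_i^k)$. $\mathcal F^0$ is the trivial $\sigma$-algebra and $\mathcal F^k=\sigma(\{\tau_i^t,s_i^t:i\in\mathcal V,\ t\le k-1\})$ for $k\ge1$. $t^k:=\frac1n\sum_{i=1}^n\frac1m\sum_{j=1}^m\|\bar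 x^k-z_{i,j}^k\|^2$. $\|\nabla\mathbf f(x^0)\|^2:=\sum_{i=1}^n\|\nabla f_i(\bar x^0)\|^2$. Norms are Euclidean (spectral for matrices); vector and matrix inequalities are entrywise. *)

(* Defs.v *)
From HB Require Import structures.
From mathcomp Require Import all_boot all_order all_algebra.
From mathcomp Require Import all_classical all_reals.
From mathcomp Require Import topology normedtype derive.
Set Implicit Arguments. Unset Strict Implicit. Unset Printing Implicit Defensive.
Import Order.TTheory GRing.Theory Num.Theory.
Import numFieldNormedType.Exports.
Local Open Scope ring_scope.

Section GTSAGA.
Variables (R : realType) (n m p : nat).

Notation vec := 'rV[R]_p.

Definition dotv (u v : vec) : R := \sum_(j < p) u ord0 j * v ord0 j.
Definition sqn (u : vec) : R := dotv u u.
Definition enorm (u : vec) : R := Num.sqrt (sqn u).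

Definition is_gradient (f : vec -> R) (g : vec -> vec) : Prop :=
  forall x, differentiable f x /\ (('d f x : vec -> R) = fun v => dotv (g x) v).

Definition L_smooth (L : R) (g : vec -> vec) : Prop :=
  forall x y, enorm (g x - g y) <= L * enorm (x - y).

Definition f_loc (f : 'I_n -> 'I_m -> vec -> R) (i : 'I_n) (x : vec) : R :=
  m%:R^-1 * \sum_(j < m) f i j x.
Definition Fobj (f : 'I_n -> 'I_m -> vec -> R) (x : vec) : R :=
  n%:R^-1 * \sum_(i < n) f_loc f i x.
Definition grad_loc (g : 'I_n -> 'I_m -> vec -> vec) (i : 'I_n) (x : vec) : vec :=
  m%:R^-1 *: \sum_(j < m) g i j x.
Definition gradF (g : 'I_n -> 'I_m -> vec -> vec) (x : vec) : vec :=
  n%:R^-1 *: \sum_(i < n) grad_loc g i x.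

Definition nonneg_mx (W : 'M[R]_n) : Prop := forall i j, 0 <= W i j.
Definition mxpow (W : 'M[R]_n) (k : nat) : 'M[R]_n := iter k (mulmx W) 1%:M.
Definition primitive_mx (W : 'M[R]_n) : Prop :=
  exists k, forall i j, 0 < mxpow W k i j.
Definition doubly_stochastic (W : 'M[R]_n) : Prop :=
  (forall i, \sum_(r < n) W i r = 1) /\ (forall r, \sum_(i < n) W i r = 1).

Definition stack := 'I_n -> vec.
Definition avg (x : stack) : vec := n%:R^-1 *: \sum_(i < n) x i.
(* ||x - J x||^2 *)
Definition consensus_err (x : stack) : R := \sum_(i < n) sqn (x i - avg x).
Definition avg_grad (g : 'I_n -> 'I_m -> vec -> vec) (x : stack) : vec :=
  n%:R^-1 *: \sum_(i < n) grad_loc g i (x i).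

(* random draws at one iteration: (tau^k_i)_i and (s^k_i)_i *)
Definition draw := ({ffun 'I_n -> 'I_m} * {ffun 'I_n -> 'I_m})%type.
Definition sample_path := nat -> draw.

(* state at iteration k: x^k, y^k, z^k, and g^{k-1} *)
Record state := State {
  st_x : stack; st_y : stack; st_z : 'I_n -> 'I_m -> vec; st_gprev : stack }.

Definition init_state (x0 : vec) : state :=
  State (fun _ => x0) (fun _ => 0) (fun _ _ => x0) (fun _ => 0).

Definition saga_g (g : 'I_n -> 'I_m -> vec -> vec) (S : state) (tau : 'I_n -> 'I_m)
  : stack := fun i =>
  g i (tau i) (st_x S i) - g i (tau i) (st_z S i (tau i))
  + m%:R^-1 *: \sum_(j < m) g i j (st_z S i j).

Definition mix (W : 'M[R]_n) (u : stack) : stack :=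
  fun i => \sum_(r < n) W i r *: u r.

Definition step (g : 'I_n -> 'I_m -> vec -> vec) (W : 'M[R]_n) (alpha : R)
  (S : state) (d : draw) : state :=
  let gk := saga_g g S d.1 in
  let ynew := mix W (fun r => st_y S r + gk r - st_gprev S r) in
  let xnew := mix W (fun r => st_x S r - alpha *: ynew r) in
  let znew := fun i j => if j == d.2 i then st_x S i else st_z S i j in
  State xnew ynew znew gk.

Fixpoint gt_saga (g : 'I_n -> 'I_m -> vec -> vec) (W : 'M[R]_n) (alpha : R)
  (x0 : vec) (w : sample_path) (k : nat) : state :=
  match k with
  | 0 => init_state x0
  | k'.+1 => step g W alpha (gt_saga g W alpha x0 w k') (w k')
  end.

Definition tk (S : state) : R :=
  n%:R^-1 * \sum_(i < n) (m%:R^-1 * \sum_(j < m) sqn (avg (st_x S) - st_z S i j)).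

(* Conditional expectation given F^k = sigma(draws at iterations < k), for a
   random variable X that depends on the sample path only through the draws at
   iterations <= k: the draws are independent and uniform, so E[X | F^k](w) is
   the uniform average over the iteration-k draw, the earlier ones being fixed. *)
Definition condexp (k : nat) (X : sample_path -> R) (w : sample_path) : R :=
  #|{: draw}|%:R^-1 *
  \sum_(d : draw) X (fun t => if t == k then d else w t).

End GTSAGA.

(* Main.v *)
Require Import Defs.
From HB Require Import structures.
From mathcomp Require Import all_boot all_order all_algebra.
From mathcomp Require Import all_classical all_reals.
From mathcomp Require Import topology normedtype derive.
From mathcomp Require Import ring lra.
Import Order.TTheory GRing.Theory Num.Theory.
Import numFieldNormedType.Exports.
Local Open Scope ring_scope.
Set Implicit Arguments. Unset Strict Implicit. Unset Printing Implicit Defensive.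



Section S.
Variables (R : realType) (p : nat).
Notation vec := 'rV[R]_p.
Notation dotv := (@dotv R p).
Notation sqn := (@sqn R p).

Lemma dotvC u v : dotv u v = dotv v u.
Proof. by apply: eq_bigr => j _; rewrite mulrC. Qed.
Lemma dotvDl u v w : dotv (u + v) w = dotv u w + dotv v w.
Proof. by rewrite /Defs.dotv -big_split; apply: eq_bigr => j _; rewrite !mxE mulrDl. Qed.
Lemma dotvDr u v w : dotv w (u + v) = dotv w u + dotv w v.
Proof. by rewrite dotvC dotvDl !(dotvC w). Qed.
Lemma dotvZl a u v : dotv (a *: u) v = a * dotv u v.
Proof. by rewrite /Defs.dotv mulr_sumr; apply: eq_bigr => j _; rewrite !mxE mulrA. Qed.
Lemma dotvZr a u v : dotv v (a *: u) = a * dotv v u.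
Proof. by rewrite dotvC dotvZl dotvC. Qed.
Lemma dotvNl u v : dotv (- u) v = - dotv u v.
Proof. by rewrite -scaleN1r dotvZl mulN1r. Qed.
Lemma dotvNr u v : dotv v (- u) = - dotv v u.
Proof. by rewrite dotvC dotvNl dotvC. Qed.
Lemma dotvBl u v w : dotv (u - v) w = dotv u w - dotv v w.
Proof. by rewrite dotvDl dotvNl. Qed.
Lemma dotvBr u v w : dotv w (u - v) = dotv w u - dotv w v.
Proof. by rewrite dotvDr dotvNr. Qed.
Lemma dotv0l v : dotv 0 v = 0.
Proof. by rewrite -(scale0r 0) dotvZl mul0r. Qed.
Lemma dotv_suml (I : finType) (P : pred I) (F : I -> vec) v :
  dotv (\sum_(i | P i) F i) v = \sum_(i | P i) dotv (F i) v.
Proof.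
apply: (big_ind2 (fun a b => dotv a v = b)) => //; first exact: dotv0l.
by move=> a b c d <- <-; rewrite dotvDl.
Qed.
Lemma sqn_ge0 v : 0 <= sqn v.
Proof. by apply: sumr_ge0 => j _; rewrite -expr2 sqr_ge0. Qed.
Lemma sqnD u v : sqn (u + v) = sqn u + 2 * dotv u v + sqn v.
Proof. by rewrite /Defs.sqn !dotvDl !dotvDr (dotvC v u); ring. Qed.
Lemma sqnB u v : sqn (u - v) = sqn u - 2 * dotv u v + sqn v.
Proof. by rewrite /Defs.sqn !dotvDl !dotvDr !dotvNl !dotvNr (dotvC v u); ring. Qed.
Lemma sqnZ a v : sqn (a *: v) = a ^+ 2 * sqn v.
Proof. by rewrite /Defs.sqn dotvZl dotvZr; ring. Qed.
Lemma sqnN v : sqn (- v) = sqn v.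
Proof. by rewrite /Defs.sqn dotvNl dotvNr opprK. Qed.
Lemma sqn_sym u v : sqn (u - v) = sqn (v - u).
Proof. by rewrite -sqnN opprB. Qed.
Lemma sqnD_le u v : sqn (u + v) <= 2 * sqn u + 2 * sqn v.
Proof.
have := sqn_ge0 (u - v); rewrite sqnB sqnD => h; lra.
Qed.

Lemma sqn_eq0 v : sqn v = 0 -> v = 0.
Proof.
move=> h; apply/rowP => j; rewrite mxE.
have : v ord0 j * v ord0 j = 0.
  apply/eqP; move: h; rewrite /Defs.sqn /Defs.dotv => /eqP.
  rewrite psumr_eq0; last by move=> i _; rewrite -expr2 sqr_ge0.
  by move=> /allP /(_ j (mem_index_enum _)) /=.
by move/eqP; rewrite mulf_eq0 orbb => /eqP.
Qed.

Lemma cauchy_schwarz u v : dotv u v ^+ 2 <= sqn u * sqn v.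
Proof.
have [u0|] := eqVneq (sqn u) 0.
  by rewrite u0 mul0r (sqn_eq0 u0) dotv0l expr0n.
move=> su0; have su : 0 < sqn u by rewrite lt_def su0 sqn_ge0.
have := sqn_ge0 ((dotv u v / sqn u) *: u - v).
rewrite sqnB sqnZ dotvZl => h.
have e : 0 <= sqn u * ((dotv u v / sqn u) ^+ 2 * sqn u - 2 * (dotv u v / sqn u * dotv u v) + sqn v).
  by apply: mulr_ge0 => //; exact: ltW.
have ee : sqn u * ((dotv u v / sqn u) ^+ 2 * sqn u - 2 * (dotv u v / sqn u * dotv u v) + sqn v)
   = sqn u * sqn v - dotv u v ^+ 2 by field.
by rewrite -subr_ge0 -ee.
Qed.

Lemma smooth_sq (L : R) (g : vec -> vec) : 0 <= L -> L_smooth L g ->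
  forall x y, sqn (g x - g y) <= L ^+ 2 * sqn (x - y).
Proof.
move=> L0 hs x y; have := hs x y; rewrite /enorm => h.
have h2 := lerXn2r 2 (sqrtr_ge0 _) (mulr_ge0 L0 (sqrtr_ge0 _)) h.
by move: h2; rewrite exprMn !sqr_sqrtr ?sqn_ge0.
Qed.

Lemma line_derive (f : vec -> R) (g : vec -> vec) (x v : vec) (t : R) :
  is_gradient f g ->
  is_derive t 1 (fun s : R => f (s *: v + x)) (dotv (g (t *: v + x)) v).
Proof.
move=> hg.
have E : (fun h : R => h^-1 *: (((fun s : R => f (s *: v + x)) \o shift t) (h *: 1)
            - f (t *: v + x)))
       = (fun h : R => h^-1 *: ((f \o shift (t *: v + x)) (h *: v) - f (t *: v + x))).
  apply/funext => h /=; congr (_ *: (f _ - _)).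
  by rewrite /shift /= [h *: 1]mulr1 scalerDl addrA.
have [d1 d2] := hg (t *: v + x).
split.
  rewrite /derivable E; have := @diff_derivable _ _ _ f (t *: v + x) v d1; exact.
rewrite /derive E -/(derive f (t *: v + x) v) deriveE // d2 //.
Qed.

Lemma descent (f : vec -> R) (g : vec -> vec) (L : R) (x v : vec) :
  is_gradient f g -> 0 <= L -> L_smooth L g ->
  f (v + x) <= f x + dotv (g x) v + L / 2 * sqn v.
Proof.
move=> hg L0 hs.
set c := dotv (g x) v; set s := sqn v.
pose psi := (fun t : R => f (t *: v + x)) - c \*: id - (L / 2 * s) \*: (id * id).
have D (t : R) : is_derive t (1:R) psi (dotv (g (t *: v + x)) v - c *: (1:R) - (L / 2 * s) *: (id t *: (1:R) + id t *: (1:R))).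
  by apply: is_deriveB; apply: is_deriveB; exact: line_derive.
have key : psi 1 <= psi 0.
  apply: (@ler0_derive1_le_cc _ psi 0 1); last 3 first.
  - by rewrite in_itv /= lexx ler01.
  - by rewrite in_itv /= lexx ler01.
  - exact: ler01.
  - by move=> t _; have [] := D t.
  - move=> t; rewrite in_itv /= => /andP [t0 t1].
    rewrite derive1E (@derive_val _ _ _ _ _ _ _ (D t)).
    set a := g (t *: v + x) - g x.
    have e1 : dotv (g (t *: v + x)) v = dotv a v + c by rewrite /a dotvBl subrK.
    have cs := cauchy_schwarz a v.
    have sm := smooth_sq L0 hs (t *: v + x) x.
    rewrite addrK sqnZ -/a -/s in sm.
    have s0 : 0 <= s := sqn_ge0 v.
    have sa0 : 0 <= sqn a := sqn_ge0 a.
    have h3 : dotv a v ^+ 2 <= (L * t * s) ^+ 2.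
      apply: le_trans cs _.
      have -> : (L * t * s) ^+ 2 = (L ^+ 2 * (t ^+ 2 * s)) * s by rewrite /s; ring.
      by apply: ler_wpM2r.
    have h4 : dotv a v <= L * t * s.
      have lts0 : 0 <= L * t * s by rewrite !mulr_ge0 // ltW.
      move: h3 lts0; set y := dotv a v; set z := L * t * s => h3 lts0.
      rewrite leNgt; apply/negP => yz.
      have : z ^+ 2 < y ^+ 2 by rewrite ltr_pXn2r // ?nnegrE // ltW // (le_lt_trans lts0).
      by rewrite ltNge h3.
    rewrite e1 [c *: 1]mulr1 /GRing.scale /= -/(GRing.mul _ _).
    rewrite !mulr1.
    lra.
  - apply: derivable_within_continuous => t _; by have [] := D t.
have e (t : R) : psi t = f (t *: v + x) - c * t - L / 2 * s * (t * t) by [].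
move: key; rewrite !e scale1r scale0r add0r !mulr1 !mulr0 subr0 => h.
lra.
Qed.
End S.



Section Exp.
Variables (R : realType) (n m : nat).
Hypothesis m0 : (0 < m)%N.

Definition T := {ffun 'I_n -> 'I_m}.
Definition E (phi : T -> R) : R := (#|{: T}|%:R)^-1 * \sum_(t : T) phi t.

Lemma cardT : #|{: T}| = (m ^ n)%N.
Proof. by rewrite card_ffun !card_ord. Qed.

Lemma mR0 : (m%:R : R) != 0.
Proof. by rewrite pnatr_eq0 -lt0n. Qed.

Lemma cardT0 : (#|{: T}|%:R : R) != 0.
Proof. by rewrite cardT natrX expf_neq0 // mR0. Qed.

Lemma mean_const (c : R) : m%:R^-1 * \sum_(j < m) c = c.
Proof. by rewrite sumr_const card_ord -[c *+ _]mulr_natl mulrA mulVf ?mR0 // mul1r. Qed.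

Lemma E_const c : E (fun _ => c) = c.
Proof. by rewrite /E sumr_const -[c *+ _]mulr_natl mulrA mulVf ?cardT0 // mul1r. Qed.

Lemma E_add phi psi : E (fun t => phi t + psi t) = E phi + E psi.
Proof. by rewrite /E big_split mulrDr. Qed.

Lemma E_scale c phi : E (fun t => c * phi t) = c * E phi.
Proof. by rewrite /E -mulr_sumr mulrCA. Qed.

Lemma E_opp phi : E (fun t => - phi t) = - E phi.
Proof. by rewrite /E sumrN mulrN. Qed.

Lemma E_sum (I : finType) (phi : I -> T -> R) :
  E (fun t => \sum_(i : I) phi i t) = \sum_(i : I) E (phi i).
Proof. by rewrite /E exchange_big mulr_sumr. Qed.

Lemma E_le phi psi : (forall t, phi t <= psi t) -> E phi <= E psi.
Proof.
move=> h; rewrite /E ler_wpM2l ?invr_ge0 ?ler0n //.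
by apply: ler_sum => t _; exact: h.
Qed.

Lemma E_prod (F : 'I_n -> 'I_m -> R) :
  E (fun t => \prod_i F i (t i)) = \prod_i (m%:R^-1 * \sum_j F i j).
Proof.
rewrite /E -(bigA_distr_bigA F) big_split /= prodr_const cardT card_ord natrX exprVn.
by [].
Qed.

Lemma E1 (i0 : 'I_n) (a : 'I_m -> R) :
  E (fun t => a (t i0)) = m%:R^-1 * \sum_j a j.
Proof.
pose F i j := if i == i0 then a j else 1.
have e1 t : a (t i0) = \prod_i F i (t i).
  rewrite (bigD1 i0) //= [X in _ * X]big1 ?mulr1 => [|i /negPf ne];
    by rewrite /F ?eqxx ?ne.
under eq_fun => t do rewrite e1.
rewrite E_prod (bigD1 i0) //= [X in _ * X]big1 ?mulr1 => [|i /negPf ne];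
  by rewrite /F ?eqxx ?ne ?mean_const.
Qed.

Lemma E2 (i0 i1 : 'I_n) (a b : 'I_m -> R) : i0 != i1 ->
  E (fun t => a (t i0) * b (t i1)) = (m%:R^-1 * \sum_j a j) * (m%:R^-1 * \sum_j b j).
Proof.
move=> ne.
pose F i j := if i == i0 then a j else if i == i1 then b j else 1.
have ne' : (i1 == i0) = false by rewrite eq_sym (negPf ne).
have e1 t : a (t i0) * b (t i1) = \prod_i F i (t i).
  rewrite (bigD1 i0) //= (bigD1 i1) ?ne' //=.
  rewrite [X in _ * (_ * X)]big1 ?mulr1 => [|i /andP [/negPf n1 /negPf n2]];
    by rewrite /F ?eqxx ?ne' ?n1 ?n2.
under eq_fun => t do rewrite e1.
rewrite E_prod (bigD1 i0) //= (bigD1 i1) /=; last by rewrite eq_sym.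
rewrite [X in _ * (_ * X)]big1 ?mulr1 => [|i /andP [/negPf n1 /negPf n2]];
  by rewrite /F ?eqxx ?ne' ?n1 ?n2 ?mean_const.
Qed.

Definition mean (a : 'I_m -> R) := m%:R^-1 * \sum_j a j.
Definition var (a : 'I_m -> R) := m%:R^-1 * \sum_j a j ^+ 2 - mean a ^+ 2.

Lemma E_sq (h : 'I_n -> 'I_m -> R) :
  E (fun t => (\sum_i h i (t i)) ^+ 2) = (\sum_i mean (h i)) ^+ 2 + \sum_i var (h i).
Proof.
have e t : (\sum_i h i (t i)) ^+ 2 = \sum_i \sum_i' h i (t i) * h i' (t i').
  by rewrite expr2 mulr_suml; apply: eq_bigr => i _; rewrite mulr_sumr.
under eq_fun => t do rewrite e.
rewrite E_sum expr2 mulr_suml -big_split /=; apply: eq_bigr => i _.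
rewrite E_sum mulr_sumr (bigD1 i) //= [in RHS](bigD1 i) //= addrAC; congr (_ + _).
  rewrite /var (E1 i (fun j => h i j * h i j)) /mean.
  have -> : \sum_j h i j ^+ 2 = \sum_j h i j * h i j by apply: eq_bigr => j _; rewrite expr2.
  by rewrite expr2 mulrA addrC subrK.
by apply: eq_bigr => i' ne; rewrite E2 // eq_sym.
Qed.

Lemma var_shift (k z : R) (y : 'I_m -> R) :
  var (fun j => k * (y j + z)) = k ^+ 2 * var y.
Proof.
have mR := mR0.
have e1 : \sum_j (k * (y j + z)) ^+ 2
   = k ^+ 2 * \sum_j y j ^+ 2 + 2 * k ^+ 2 * z * \sum_j y j + m%:R * (k ^+ 2 * z ^+ 2).
  have -> : \sum_j (k * (y j + z)) ^+ 2
     = \sum_j (k ^+ 2 * y j ^+ 2 + 2 * k ^+ 2 * z * y j + k ^+ 2 * z ^+ 2).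
    by apply: eq_bigr => j _; ring.
  by rewrite !big_split /= sumr_const card_ord -[_ *+ m]mulr_natl -!mulr_sumr.
have e2 : \sum_j k * (y j + z) = k * \sum_j y j + m%:R * (k * z).
  have -> : \sum_j k * (y j + z) = \sum_j (k * y j + k * z) by apply: eq_bigr => j _; ring.
  by rewrite big_split /= sumr_const card_ord -[_ *+ m]mulr_natl -mulr_sumr.
rewrite /var /mean e1 e2; field; exact: mR.
Qed.

Lemma var_le (y : 'I_m -> R) : var y <= m%:R^-1 * \sum_j y j ^+ 2.
Proof. by rewrite /var lerBlDr lerDl sqr_ge0. Qed.
End Exp.



Section Jen.
Variables (R : realType) (p : nat).

Lemma sum_const_ord N (c : R) : \sum_(j < N) c = N%:R * c.
Proof. by rewrite sumr_const card_ord mulr_natl. Qed.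

Lemma jensen_sc N (y : 'I_N -> R) : (0 < N)%N ->
  (N%:R^-1 * \sum_j y j) ^+ 2 <= N%:R^-1 * \sum_j y j ^+ 2.
Proof.
move=> N0; have NR : (N%:R : R) != 0 by rewrite pnatr_eq0 -lt0n.
have Np : (0 : R) < N%:R by rewrite ltr0n.
set yb := N%:R^-1 * \sum_j y j.
have sy : \sum_j y j = N%:R * yb by rewrite /yb mulrA mulfV // mul1r.
have h : 0 <= \sum_j (y j - yb) ^+ 2 by apply: sumr_ge0 => j _; exact: sqr_ge0.
have e : \sum_j (y j - yb) ^+ 2 = \sum_j y j ^+ 2 - N%:R * yb ^+ 2.
  have -> : \sum_j (y j - yb) ^+ 2 = \sum_j (y j ^+ 2 - 2 * yb * y j + yb ^+ 2).
    by apply: eq_bigr => j _; ring.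
  rewrite big_split sumrB /= -mulr_sumr sy sum_const_ord; ring.
rewrite e subr_ge0 in h.
have e2 : N%:R * (N%:R^-1 * \sum_j y j ^+ 2) = \sum_j y j ^+ 2 by field.
by rewrite -(ler_pM2l Np) e2.
Qed.

Lemma sqnE (v : 'rV[R]_p) : sqn v = \sum_c (v ord0 c) ^+ 2.
Proof. by apply: eq_bigr => c _; rewrite expr2. Qed.

Lemma jensen_vec N (v : 'I_N -> 'rV[R]_p) : (0 < N)%N ->
  sqn (N%:R^-1 *: \sum_k v k) <= N%:R^-1 * \sum_k sqn (v k).
Proof.
move=> N0; rewrite (sqnE (N%:R^-1 *: \sum_k v k)).
have -> : \sum_k sqn (v k) = \sum_c \sum_k (v k ord0 c) ^+ 2.
  by rewrite [RHS]exchange_big; apply: eq_bigr => k _; rewrite sqnE.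
rewrite mulr_sumr; apply: ler_sum => c _.
rewrite mxE summxE; exact: jensen_sc.
Qed.
End Jen.



Section Alg.
Variables (R : realType) (n m p : nat).
Variables (g : 'I_n -> 'I_m -> 'rV[R]_p -> 'rV[R]_p) (W : 'M[R]_n) (alpha : R) (x0 : 'rV[R]_p).
Hypothesis hW : forall r, \sum_(i < n) W i r = 1.

Lemma avgD (u v : stack R n p) : avg (fun i => u i + v i) = avg u + avg v.
Proof. by rewrite /avg big_split scalerDr. Qed.
Lemma avgN (u : stack R n p) : avg (fun i => - u i) = - avg u.
Proof. by rewrite /avg sumrN scalerN. Qed.
Lemma avgB (u v : stack R n p) : avg (fun i => u i - v i) = avg u - avg v.
Proof. by rewrite avgD avgN. Qed.
Lemma avgZ a (u : stack R n p) : avg (fun i => a *: u i) = a *: avg u.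
Proof. by rewrite /avg -scaler_sumr !scalerA mulrC. Qed.

Lemma avg_mix (u : stack R n p) : avg (mix W u) = avg u.
Proof.
rewrite /avg /mix exchange_big /=; congr (_ *: _); apply: eq_bigr => r _.
by rewrite -scaler_suml hW scale1r.
Qed.

Lemma gt_prefix k (w1 w2 : sample_path n m) :
  (forall t, (t < k)%N -> w1 t = w2 t) -> gt_saga g W alpha x0 w1 k = gt_saga g W alpha x0 w2 k.
Proof.
elim: k => [//|k IH] h /=.
by rewrite IH ?h // => t tk; apply: h; exact: ltnW.
Qed.

Lemma avg_ynew (S : state R n m p) (gk : stack R n p) :
  avg (st_y S) = avg (st_gprev S) ->
  avg (mix W (fun r => st_y S r + gk r - st_gprev S r)) = avg gk.
Proof.
move=> h; rewrite avg_mix (avgB (fun r => st_y S r + gk r) (st_gprev S)) avgD.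
by rewrite h addrAC subrr add0r.
Qed.

Lemma inv_y k w : avg (st_y (gt_saga g W alpha x0 w k)) = avg (st_gprev (gt_saga g W alpha x0 w k)).
Proof.
case: k => [|k] /=; first by [].
by rewrite avg_ynew //; elim: k => [//|k IH] /=; rewrite avg_ynew.
Qed.

Lemma step_x k w d :
  let S := gt_saga g W alpha x0 w k in
  avg (st_x (step g W alpha S d)) = avg (st_x S) - alpha *: avg (saga_g g S d.1).
Proof.
move=> S; rewrite /step /= avg_mix.
rewrite (avgB (st_x S) (fun r => alpha *: mix W (fun r0 => st_y S r0 + saga_g g S d.1 r0 - st_gprev S r0) r)).
by rewrite avgZ avg_ynew // /S inv_y.
Qed.

End Alg.



Section Main.
Variables (R : realType) (n m p : nat).
Variables (f : 'I_n -> 'I_m -> 'rV[R]_p -> R) (g : 'I_n -> 'I_m -> 'rV[R]_p -> 'rV[R]_p).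
Variable (L : R).
Hypotheses (n0 : (0 < n)%N) (m0 : (0 < m)%N).
Hypothesis hg : forall i j, is_gradient (f i j) (g i j).
Hypothesis L0 : 0 <= L.
Hypothesis hs : forall i j, L_smooth L (g i j).

Lemma descent_F x v : Fobj f (v + x) <= Fobj f x + dotv (gradF g x) v + L / 2 * sqn v.
Proof.
set c := L / 2 * sqn v.
have le : Fobj f (v + x) <= n%:R^-1 * \sum_i (m%:R^-1 * \sum_j (f i j x + dotv (g i j x) v + c)).
  rewrite /Fobj /f_loc ler_wpM2l ?invr_ge0 ?ler0n //; apply: ler_sum => i _.
  rewrite ler_wpM2l ?invr_ge0 ?ler0n //; apply: ler_sum => j _.
  exact: descent.
apply: (le_trans le) => {le}; rewrite le_eqVlt; apply/orP; left; apply/eqP.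
rewrite /Fobj /f_loc /gradF /grad_loc dotvZl dotv_suml.
under eq_bigr => i _ do rewrite !big_split /= !mulrDr (mean_const m0).
rewrite !big_split /= !mulrDr (mean_const n0); congr (_ + _ + _).
by congr (_ * _); apply: eq_bigr => i _; rewrite dotvZl dotv_suml.
Qed.

Definition sg (S : state R n m p) i j : 'rV[R]_p :=
  g i j (st_x S i) - g i j (st_z S i j) + m%:R^-1 *: \sum_(j' < m) g i j' (st_z S i j').

Lemma mR0' : (m%:R : R) != 0. Proof. by rewrite pnatr_eq0 -lt0n. Qed.
Lemma nR0' : (n%:R : R) != 0. Proof. by rewrite pnatr_eq0 -lt0n. Qed.

Lemma mean_sg S i : m%:R^-1 *: \sum_j sg S i j = grad_loc g i (st_x S i).
Proof.
rewrite /sg big_split /= sumrB sumr_const card_ord -[(m%:R^-1 *: _) *+ m]scaler_nat scalerA mulfV ?mR0' //.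
by rewrite scale1r subrK.
Qed.

Lemma E_dot S c : E (fun t : T n m => dotv c (avg (saga_g g S t))) = dotv c (avg_grad g (st_x S)).
Proof.
have e t : dotv c (avg (saga_g g S t)) = n%:R^-1 * \sum_i dotv (sg S i (t i)) c.
  by rewrite dotvC /avg dotvZl dotv_suml.
under eq_fun => t do rewrite e.
rewrite E_scale E_sum.
under eq_bigr => i _ do rewrite (E1 m0 i (fun j => dotv (sg S i j) c)).
rewrite dotvC /avg_grad dotvZl dotv_suml; congr (_ * _); apply: eq_bigr => i _.
by rewrite -mean_sg dotvZl dotv_suml.
Qed.

Lemma E_sqn S : E (fun t : T n m => sqn (avg (saga_g g S t))) =
  sqn (avg_grad g (st_x S)) + \sum_i \sum_c var (fun j => n%:R^-1 * sg S i j ord0 c).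
Proof.
have e t : sqn (avg (saga_g g S t)) = \sum_c (\sum_i n%:R^-1 * sg S i (t i) ord0 c) ^+ 2.
  rewrite sqnE; apply: eq_bigr => c _; rewrite /avg mxE summxE mulr_sumr.
  by [].
under eq_fun => t do rewrite e.
rewrite E_sum.
under eq_bigr => c _ do rewrite (E_sq m0 (fun i j => n%:R^-1 * sg S i j ord0 c)).
rewrite big_split /= [in RHS]exchange_big sqnE; congr (_ + _).
apply: eq_bigr => c _; congr (_ ^+ 2).
rewrite /avg_grad mxE summxE mulr_sumr; apply: eq_bigr => i _.
rewrite -mean_sg mxE summxE /mean -mulr_sumr; ring.
Qed.

Lemma var_sg S i c : var (fun j => n%:R^-1 * sg S i j ord0 c) <=
  n%:R^-1 ^+ 2 * (m%:R^-1 * \sum_j ((g i j (st_x S i) - g i j (st_z S i j)) ord0 c) ^+ 2).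
Proof.
set zb := m%:R^-1 *: \sum_(j' < m) g i j' (st_z S i j').
have -> : (fun j => n%:R^-1 * sg S i j ord0 c)
   = (fun j => n%:R^-1 * ((g i j (st_x S i) - g i j (st_z S i j)) ord0 c + zb ord0 c)).
  by apply/funext => j; rewrite /sg mxE.
rewrite var_shift //; apply: ler_wpM2l; first exact: sqr_ge0.
exact: var_le.
Qed.

Lemma V_bound S : \sum_i \sum_c var (fun j => n%:R^-1 * sg S i j ord0 c) <=
  n%:R^-1 ^+ 2 * \sum_i (m%:R^-1 * \sum_j sqn (g i j (st_x S i) - g i j (st_z S i j))).
Proof.
rewrite mulr_sumr; apply: ler_sum => i _.
apply: le_trans (ler_sum _ (fun c _ => var_sg S i c)) _.
rewrite -mulr_sumr -mulr_sumr exchange_big /=.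
by under [in X in _ <= X]eq_bigr => j _ do rewrite sqnE.
Qed.

Lemma Q_bound S :
  \sum_i (m%:R^-1 * \sum_j sqn (g i j (st_x S i) - g i j (st_z S i j))) <=
  2 * L ^+ 2 * consensus_err (st_x S)
  + 2 * L ^+ 2 * \sum_i (m%:R^-1 * \sum_j sqn (avg (st_x S) - st_z S i j)).
Proof.
rewrite /consensus_err [2 * L ^+ 2 * \sum_i sqn _]mulr_sumr.
rewrite [2 * L ^+ 2 * \sum_i (_ * _)]mulr_sumr -big_split /=; apply: ler_sum => i _.
have -> : 2 * L ^+ 2 * sqn (st_x S i - avg (st_x S)) +
    2 * L ^+ 2 * (m%:R^-1 * \sum_j sqn (avg (st_x S) - st_z S i j))
  = m%:R^-1 * \sum_j (2 * L ^+ 2 * sqn (st_x S i - avg (st_x S)) +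
                     2 * L ^+ 2 * sqn (avg (st_x S) - st_z S i j)).
  by rewrite big_split /= mulrDr (mean_const m0) -[in RHS]mulr_sumr; congr (_ + _); ring.
rewrite ler_wpM2l ?invr_ge0 ?ler0n //; apply: ler_sum => j _.
apply: le_trans (smooth_sq L0 (hs i j) _ _) _.
have -> : st_x S i - st_z S i j = (st_x S i - avg (st_x S)) + (avg (st_x S) - st_z S i j).
  by rewrite addrA subrK.
have := sqnD_le (st_x S i - avg (st_x S)) (avg (st_x S) - st_z S i j).
have := sqr_ge0 L => hL h.
set a := sqn (st_x S i - avg (st_x S)); set b := sqn (avg (st_x S) - st_z S i j).
have -> : 2 * L ^+ 2 * a + 2 * L ^+ 2 * b = L ^+ 2 * (2 * a + 2 * b) by ring.
exact: ler_wpM2l.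
Qed.

Lemma Eprime_bound x : sqn (gradF g (avg x) - avg_grad g x) <= L ^+ 2 * (n%:R^-1 * consensus_err x).
Proof.
rewrite /gradF /avg_grad -scalerBr -sumrB.
apply: le_trans (jensen_vec _ n0) _.
rewrite mulrCA ler_wpM2l ?invr_ge0 ?ler0n // /consensus_err mulr_sumr.
apply: ler_sum => i _.
rewrite /grad_loc -scalerBr -sumrB.
apply: le_trans (jensen_vec _ m0) _.
rewrite -[X in _ <= X](mean_const m0) ler_wpM2l ?invr_ge0 ?ler0n //.
apply: ler_sum => j _; rewrite sqn_sym; exact: smooth_sq.
Qed.
End Main.



Lemma condexp_red (R : realType) (n m p : nat)
  (f : 'I_n -> 'I_m -> 'rV[R]_p -> R) (g : 'I_n -> 'I_m -> 'rV[R]_p -> 'rV[R]_p)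
  (W : 'M[R]_n) (alpha : R) (x0 : 'rV[R]_p) :
  (0 < m)%N -> (forall r, \sum_(i < n) W i r = 1) ->
  forall (k : nat) (w : sample_path n m),
  let S := gt_saga g W alpha x0 w k in
  condexp k (fun w' => Fobj f (avg (st_x (gt_saga g W alpha x0 w' k.+1)))) w
  = E (fun t : T n m => Fobj f (avg (st_x S) - alpha *: avg (saga_g g S t))).
Proof.
move=> m0 hW k w S.
rewrite /condexp /E.
have e (d : draw n m) : Fobj f (avg (st_x (gt_saga g W alpha x0 (fun t => if t == k then d else w t) k.+1)))
   = Fobj f (avg (st_x S) - alpha *: avg (saga_g g S d.1)).
  rewrite /= eqxx (@gt_prefix _ _ _ _ g W alpha x0 k _ w); last first.
    by move=> t tk; rewrite (ltn_eqF tk).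
  by rewrite step_x.
under eq_bigr => d _ do rewrite e.
rewrite -(pair_bigA _ (fun t1 t2 : T n m => Fobj f (avg (st_x S) - alpha *: avg (saga_g g S t1)))) /=.
under eq_bigr => t1 _ do rewrite sumr_const -mulr_natl.
rewrite -mulr_sumr card_prod !card_ffun !card_ord.
have h : ((m ^ n)%N%:R : R) != 0 by rewrite natrX expf_neq0 // pnatr_eq0 -lt0n.
rewrite natrM; field; exact: h.
Qed.

Unset Implicit Arguments.
Set Strict Implicit.

Theorem lemma4 (R : realType) (n m p : nat)
  (f : 'I_n -> 'I_m -> 'rV[R]_p -> R) (g : 'I_n -> 'I_m -> 'rV[R]_p -> 'rV[R]_p)
  (L : R) (W : 'M[R]_n) (alpha : R) (x0 : 'rV[R]_p) :
  (0 < n)%N -> (0 < m)%N -> (0 < p)%N ->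
  (forall i j, is_gradient (f i j) (g i j)) ->
  0 < L -> (forall i j, L_smooth L (g i j)) ->
  (exists b : R, forall x, b <= Fobj f x) ->
  nonneg_mx W -> primitive_mx W -> doubly_stochastic W ->
  0 < alpha -> alpha <= (2 * L)^-1 ->
  forall (k : nat) (w : sample_path n m),
    let S := gt_saga g W alpha x0 w k in
    condexp k (fun w' => Fobj f (avg (st_x (gt_saga g W alpha x0 w' k.+1)))) w
    <= Fobj f (avg (st_x S))
       - alpha / 2 * sqn (gradF g (avg (st_x S)))
       - alpha / 4 * sqn (avg_grad g (st_x S))
       + alpha * L ^+ 2 / n%:R * consensus_err (st_x S)
       + alpha ^+ 2 * L ^+ 3 / n%:R * tk S.
Proof.
move=> n0 m0 _ hg Lp hs _ _ _ [_ hW] ap aL k w; rewrite /=; set S := gt_saga g W alpha x0 w k.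
have L0 : 0 <= L := ltW Lp.
rewrite condexp_red // -/S.
set xb := avg (st_x S).
set gF := gradF g xb.
set mu := avg_grad g (st_x S).
have h1 : E (fun t : T n m => Fobj f (xb - alpha *: avg (saga_g g S t))) <=
  E (fun t : T n m => (Fobj f xb + (- alpha) * dotv gF (avg (saga_g g S t)))
                      + (L / 2 * alpha ^+ 2) * sqn (avg (saga_g g S t))).
  apply: E_le => t.
  have := descent_F n0 m0 hg L0 hs xb (- alpha *: avg (saga_g g S t)).
  by rewrite dotvZr sqnZ sqrrN [- alpha *: _ + xb]addrC scaleNr mulrA.
rewrite (E_add (fun t => Fobj f xb + (- alpha) * dotv gF (avg (saga_g g S t)))) in h1.
rewrite (E_add (fun _ => Fobj f xb)) (E_const n m0) in h1.
rewrite (E_scale (- alpha)) (E_scale (L / 2 * alpha ^+ 2)) E_dot // E_sqn // in h1.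
apply: (le_trans h1) => {h1}.
set V := \sum_i \sum_c _.
set Q := \sum_i (m%:R^-1 * \sum_j sqn (g i j (st_x S i) - g i j (st_z S i j))).
set P := \sum_i (m%:R^-1 * \sum_j sqn (avg (st_x S) - st_z S i j)).
set C := consensus_err (st_x S).
have hV : V <= n%:R^-1 ^+ 2 * Q := V_bound g m0 S.
have hQ : Q <= 2 * L ^+ 2 * C + 2 * L ^+ 2 * P := Q_bound m0 L0 hs S.
have hE : sqn (gF - mu) <= L ^+ 2 * (n%:R^-1 * C) := Eprime_bound n0 m0 L0 hs (st_x S).
rewrite sqnB -/(sqn gF) -/(sqn mu) in hE.
have -> : tk S = n%:R^-1 * P by [].
set A := sqn gF in hE *; set B := sqn mu in hE *; set D := dotv gF mu in hE *.
set q := n%:R^-1.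
have q0 : 0 < q by rewrite invr_gt0 ltr0n.
have q1 : q <= 1 by rewrite invf_le1 ?ler1n ?ltr0n.
have aL' : alpha * L <= 1 / 2.
  have e : (2 * L)^-1 * L = 1 / 2 by field; rewrite gt_eqF.
  by rewrite -e; apply: ler_wpM2r.
have B0 : 0 <= B := sqn_ge0 _.
have C0 : 0 <= C by rewrite /C /consensus_err; apply: sumr_ge0 => i _; exact: sqn_ge0.
have P0 : 0 <= P.
  apply: sumr_ge0 => i _; apply: mulr_ge0; rewrite ?invr_ge0 ?ler0n //.
  by apply: sumr_ge0 => j _; exact: sqn_ge0.
have a0 : 0 <= alpha := ltW ap.
have f1 : alpha * (alpha * L) * B <= alpha * (1 / 2) * B.
  by apply: ler_wpM2r => //; apply: ler_wpM2l.
have f2 : alpha * (A - 2 * D + B) <= alpha * (L ^+ 2 * (q * C)) by apply: ler_wpM2l.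
have f3 : L * alpha ^+ 2 * V <= L * alpha ^+ 2 * (q ^+ 2 * (2 * L ^+ 2 * C + 2 * L ^+ 2 * P)).
  apply: ler_wpM2l; first by rewrite mulr_ge0 // sqr_ge0.
  apply: le_trans hV _; apply: ler_wpM2l => //; exact: sqr_ge0.
have aLq : alpha * L * q <= 1 / 2.
  apply: le_trans aL'; rewrite -[X in _ <= X]mulr1; apply: ler_wpM2l => //.
  exact: mulr_ge0.
have f4 : (alpha * L * q) * (alpha * L ^+ 2 * q * C) <= 1 / 2 * (alpha * L ^+ 2 * q * C).
  by apply: ler_wpM2r => //; rewrite !mulr_ge0 // ?sqr_ge0 // ltW.
lra.
Qed.
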